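(* Let $b,s,t,v$ be complex parameters and let the operators below act on the variable $a$. Then \[ T(bD_q)\left\{\frac{(as,at;q)_\infty}{(av;q)_\infty}\right\}= \frac{(as,at;q)_\infty}{(av;q)_\infty}\sum_{k=0}^\infty \frac{(-1)^kq^{\binom{k}{2}}(av;q)_k(bs)^k}{(q;q)_k(as,at;q)_k}\, {}_{2}\phi_1\left(\begin{array}{c} t/v,\ 0\\ atq^k\end{array};q,bv\right). \]
   Context: $q$ is a fixed complex number with $0<|q|<1$. For complex $a$: $(a;q)_\infty=\prod_{k\ge0}(1-aq^k)$, $(a;q)_n=(a;q)_\infty/(aq^n;q)_\infty$, and $(a_1,\dots,a_m;q)_n=(a_1;q)_n\cdots(a_m;q)_n$ (also for $n=\infty$). The basic hypergeometric series is ${}_r\phi_s\left(\begin{array}{c}a_1,\dots,a_r\\ b_1,\dots,b_s\end{array};q,x\right)=\sum_{n\ge0}\frac{(a_1,\dots,a_r;q)_n}{(q,b_1,\dots,b_s;q)_n}\big[(-1)^nq^{\binom n2}\big]^{1+s-r}x^n$. The $q$-derivative acting on $a$ is $D_q\{f(a)\}=\frac{f(a)-f(aq)}{a}$, $D_q^0$ is the identity, and the $q$-exponential operator is $T(bD_q)=\sum_{n=0}^\infty \frac{(bD_q)^n}{(q;q)_n}$, i.e. $T(bD_q)\{f\}=\sum_{n\ge0}\frac{b^n}{(q;q)_n}D_q^n\{f\}$. *)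

(* Defs.v *)
From HB Require Import structures.
From mathcomp Require Import all_boot all_order all_algebra.
From mathcomp Require Export complex.
From mathcomp Require Import all_classical all_reals all_analysis.
Set Implicit Arguments. Unset Strict Implicit. Unset Printing Implicit Defensive.
Import Order.TTheory GRing.Theory Num.Theory.
Import numFieldTopology.Exports numFieldNormedType.Exports.
Local Open Scope classical_set_scope.
Local Open Scope ring_scope.
Local Open Scope complex_scope.

(* the complex numbers over R, seen as a numClosedFieldType so that the
   generic (norm-induced) topology/normed-module instances apply *)
Definition Cplx (R : realType) : numClosedFieldType := R[i].

Section QDefs.
Variable R : realType.
Notation C := (Cplx R).

Definition qpoch (a q : C) (n : nat) : C := \prod_(k < n) (1 - a * q ^+ k).

Definition qpoch_inf (a q : C) : C := limn (qpoch a q).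

Definition Dq (q : C) (f : C -> C) : C -> C := fun a => (f a - f (a * q)) / a.

Definition Dqn (q : C) (n : nat) (f : C -> C) : C -> C := iter n (Dq q) f.

Definition Tq_term (q b : C) (f : C -> C) (a : C) (n : nat) : C :=
  b ^+ n / qpoch q q n * Dqn q n f a.

Definition Tq (q b : C) (f : C -> C) (a : C) : C :=
  limn (series (Tq_term q b f a)).

(* n-th term of 2phi1(a1,a2;b1;q,x)  (here 1+s-r = 0, so no extra factor) *)
Definition phi21_term (a1 a2 b1 q x : C) (n : nat) : C :=
  qpoch a1 q n * qpoch a2 q n / (qpoch q q n * qpoch b1 q n) * x ^+ n.

Definition phi21 (a1 a2 b1 q x : C) : C := limn (series (phi21_term a1 a2 b1 q x)).

End QDefs.

(* Main.v *)
Require Import Defs.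
From HB Require Import structures.
From mathcomp Require Import all_boot all_order all_algebra.
From mathcomp Require Import complex.
From mathcomp Require Import all_classical all_reals all_analysis.
From mathcomp Require Import ring lra.
Import Order.TTheory GRing.Theory Num.Theory.
Import numFieldTopology.Exports numFieldNormedType.Exports.
Local Open Scope classical_set_scope.
Local Open Scope ring_scope.
Local Open Scope complex_scope.
Local Notation RE := complex.Re.
Local Notation IM := complex.Im.
Section A.
Variable R : realType.
Local Notation C := (Cplx R).

Lemma real_of_ge0 {r : C} : 0 <= r -> r = (RE r)%:C.
Proof. by move=> h; rewrite RRe_real // ger0_real. Qed.

Lemma geo_small (r eps : C) : 0 <= r -> r < 1 -> 0 < eps ->
  exists N, r ^+ N < eps.
Proof.
move=> r0 r1 e0.
have r0' := r0; have e0' := ltW e0.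
rewrite (real_of_ge0 r0') (real_of_ge0 e0') in r0 r1 e0 *.
rewrite lecR in r0. rewrite ltcR in r1.
have {}e0 : 0 < RE eps by rewrite -ltcR.
have hz : `|RE r| < 1 by rewrite ger0_norm.
have := cvg_geometric 1 hz.
move=> /cvgrPdist_lt /(_ _ e0) [N _ HN].
exists N; have := HN N (leqnn N).
rewrite /geometric /= sub0r normrN mul1r ger0_norm ?exprn_ge0 // => h.
by rewrite -rmorphXn ltcR.
Qed.
End A.

Section B.
Variable R : realType.
Local Notation C := (Cplx R).

Lemma norm_realC (x : R) : `|(x%:C : C)| = (`|x|)%:C.
Proof. by rewrite normc_def /= expr0n /= addr0 sqrtr_sqr. Qed.

Lemma normiC : `|('i%C : C)| = 1.
Proof. by rewrite complexiE normCi. Qed.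

Lemma norm_le_ReIm (z : C) : `|z| <= (`|RE z| + `|IM z|)%:C.
Proof.
rewrite {1}[z]complexE rmorphD /=.
apply: le_trans (ler_normD _ _) _.
by rewrite normrM normiC mul1r !norm_realC.
Qed.

Lemma Re_le_norm (z : C) : `|RE z|%:C <= `|z|.
Proof. exact: normc_ge_Re. Qed.

Lemma Im_le_norm (z : C) : `|IM z|%:C <= `|z|.
Proof.
have := normc_ge_Re (z * 'i%C).
by rewrite ReiNIm normrN normrM normiC mulr1.
Qed.

Lemma RE_sub (x y : C) : RE (x - y) = RE x - RE y.
Proof. by case: x => ? ?; case: y => ? ?. Qed.
Lemma IM_sub (x y : C) : IM (x - y) = IM x - IM y.
Proof. by case: x => ? ?; case: y => ? ?. Qed.

Definition cauchyC (w : nat -> C) := forall eps : C, 0 < eps ->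
  exists N, forall n, (N <= n)%N -> `|w n - w N| < eps.

Lemma proj_cvg (p : C -> R) (w : nat -> C) :
  (forall x y, `|p x - p y|%:C <= `|x - y|) ->
  cauchyC w -> cvg ((fun n => p (w n)) @ \oo).
Proof.
move=> hp H; apply: cauchy_cvg; apply: cauchy_exP => e e0.
have e0' : (0:R)%:C < e%:C by rewrite ltcR.
have [N HN] := H e%:C e0'.
exists (p (w N)); exists N => // n /= hn.
rewrite /ball /= -ltcR; apply: le_lt_trans (hp _ _) _.
by rewrite distrC; apply: HN.
Qed.

Lemma C_cauchy (u : nat -> C) : cauchyC u -> cvg (u @ \oo).
Proof.
move=> Hu.
have hre := @proj_cvg (@complex.Re R) u (fun x y => ltac:(rewrite -RE_sub; exact: Re_le_norm)) Hu.
have him := @proj_cvg (@complex.Im R) u (fun x y => ltac:(rewrite -IM_sub; exact: Im_le_norm)) Hu.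
set lr := lim _ in hre; set li := lim _ in him.
apply: (cvgP ((lr +i* li)%C : C)).
apply/cvgrPdist_lt => eps e0.
have eps0 := ltW e0; rewrite (real_of_ge0 _ eps0) in e0 *.
have {}e0 : 0 < RE eps by rewrite -ltcR.
have e2 : 0 < RE eps / 2 by rewrite divr_gt0.
move: hre => /cvgrPdist_lt /(_ _ e2) hre.
move: him => /cvgrPdist_lt /(_ _ e2) him.
near=> n.
have h1 : `|lr - RE (u n)| < RE eps / 2 by near: n; exact: hre.
have h2 : `|li - IM (u n)| < RE eps / 2 by near: n; exact: him.
apply: le_lt_trans (norm_le_ReIm _) _.
rewrite RE_sub IM_sub /= ltcR.
by rewrite [RE eps](splitr (RE eps)) ltrD.
Unshelve. all: by end_near.
Qed.

Lemma le_of_eps (x y : C) : x \is Num.real -> y \is Num.real ->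
  (forall e : C, 0 < e -> x <= y + e) -> x <= y.
Proof.
move=> hx hy H; have [//|ltyx] := real_leP hx hy.
have he : 0 < (x - y) / 2 by rewrite divr_gt0 // subr_gt0.
have := H _ he; rewrite -subr_ge0.
have -> : y + (x - y) / 2 - x = - ((x - y) / 2) by field.
by rewrite oppr_ge0 => /(lt_le_trans he); rewrite ltxx.
Qed.

Lemma geom_partial (u : nat -> C) (K r : C) : 0 <= K -> 0 <= r -> r < 1 ->
  (forall n, `|u n.+1 - u n| <= K * r ^+ n) ->
  forall n m, `|u (n + m)%N - u n| * (1 - r) <= K * r ^+ n * (1 - r ^+ m).
Proof.
move=> K0 r0 r1 H n; elim=> [|m IH].
  by rewrite addn0 subrr normr0 mul0r expr0 subrr mulr0.
have r1' : 0 <= 1 - r by rewrite subr_ge0 ltW.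
rewrite addnS.
have -> : u (n + m).+1 - u n = (u (n + m).+1 - u (n + m)%N) + (u (n + m)%N - u n) by rewrite addrA subrK.
apply: le_trans (ler_wpM2r r1' (ler_normD _ _)) _.
rewrite mulrDl.
apply: le_trans (lerD (ler_wpM2r r1' (H _)) IH) _.
by rewrite exprD exprS; rewrite le_eqVlt; apply/orP; left; apply/eqP; ring.
Qed.

Lemma geom_cvg (u : nat -> C) (K r : C) : 0 <= K -> 0 <= r -> r < 1 ->
  (forall n, `|u n.+1 - u n| <= K * r ^+ n) ->
  cvg (u @ \oo) /\ forall n, `|limn u - u n| <= K * r ^+ n / (1 - r).
Proof.
move=> K0 r0 r1 H.
have r1' : 0 < 1 - r by rewrite subr_gt0.
have HP := @geom_partial u K r K0 r0 r1 H.
have HB : forall n m, (n <= m)%N -> `|u m - u n| <= K * r ^+ n / (1 - r).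
  move=> n m nm; rewrite -(subnKC nm) ler_pdivlMr //.
  apply: le_trans (HP _ _) _; rewrite ler_piMr ?mulr_ge0 ?exprn_ge0 //.
  by rewrite lerBlDr lerDl exprn_ge0.
have cv : cvg (u @ \oo).
  apply: C_cauchy => eps e0.
  have [N HN] : exists N, r ^+ N < eps * (1 - r) / (K + 1).
    by apply: geo_small => //; rewrite divr_gt0 ?mulr_gt0 // ltr_wpDl.
  exists N => n nN.
  apply: le_lt_trans (HB _ _ nN) _.
  rewrite ltr_pdivrMr //.
  apply: (@le_lt_trans _ _ ((K + 1) * r ^+ N)).
    by rewrite ler_wpM2r ?exprn_ge0 // lerDl.
  by rewrite mulrC -ltr_pdivlMr ?ltr_wpDl.
split=> // n.
apply: le_of_eps; first exact: normr_real.
  by apply: ger0_real; rewrite divr_ge0 ?mulr_ge0 ?exprn_ge0 // ltW.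
move=> e e0; have := cv => /cvgrPdist_lt /(_ e e0) [N _ HN].
have h1 := HN (maxn N n) (leq_maxl N n).
have h2 := HB n (maxn N n) (leq_maxr N n).
have -> : limn u - u n = (limn u - u (maxn N n)) + (u (maxn N n) - u n) by rewrite addrA subrK.
apply: le_trans (ler_normD _ _) _; rewrite addrC; apply: lerD => //; exact: ltW.
Qed.
End B.

Section Cq.
Variable R : realType.
Local Notation C := (Cplx R).
Variable q : C.
Hypothesis hq1 : `|q| < 1.

Lemma qpochS (x : C) n : qpoch x q n.+1 = qpoch x q n * (1 - x * q ^+ n).
Proof. by rewrite /qpoch big_ord_recr. Qed.

Lemma qpoch0 (x : C) : qpoch x q 0 = 1.
Proof. by rewrite /qpoch big_ord0. Qed.

Lemma qpochSl (x : C) n : qpoch x q n.+1 = (1 - x) * qpoch (x * q) q n.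
Proof.
rewrite /qpoch big_ord_recl /= expr0 mulr1; congr (_ * _).
by apply: eq_bigr => i _; rewrite /bump /= add1n exprS mulrA.
Qed.

Lemma qpochD (x : C) k m : qpoch x q (k + m) = qpoch x q k * qpoch (x * q ^+ k) q m.
Proof.
elim: m => [|m IH]; first by rewrite addn0 qpoch0 mulr1.
by rewrite addnS !qpochS IH exprD mulrA -mulrA.
Qed.

Lemma qpoch_0x n : qpoch 0 q n = 1.
Proof. by elim: n => [|n IH]; rewrite ?qpoch0 // qpochS IH mul0r subr0 mulr1. Qed.

Lemma qpoch_neq0 (x : C) : (forall k, x * q ^+ k != 1) -> forall n, qpoch x q n != 0.
Proof.
move=> hx; elim=> [|n IH]; first by rewrite qpoch0 oner_neq0.
by rewrite qpochS mulf_neq0 // subr_eq0 eq_sym hx.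
Qed.

Lemma geom_sum (r : C) n : \sum_(k < n) r ^+ k * (1 - r) = 1 - r ^+ n.
Proof.
elim: n => [|n IH]; first by rewrite big_ord0 expr0 subrr.
by rewrite big_ord_recr /= IH exprS; ring.
Qed.

Lemma wlow (y : nat -> C) n : (forall k, 0 <= y k <= 1) ->
  1 - \sum_(k < n) y k <= \prod_(k < n) (1 - y k).
Proof.
move=> hy; elim: n => [|n IH]; first by rewrite !big_ord0 subr0.
rewrite !big_ord_recr /=; have /andP [y0 y1] := hy n.
set S := \sum_(k < n) y k.
have S0 : 0 <= S by apply: sumr_ge0 => k _; have /andP [] := hy k.
apply: (@le_trans _ _ ((1 - S) * (1 - y n))).
  rewrite -subr_ge0.
  have -> : (1 - S) * (1 - y n) - (1 - (S + y n)) = S * y n by ring.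
  exact: mulr_ge0.
by apply: ler_wpM2r => //; rewrite subr_ge0.
Qed.

Lemma wup (y : nat -> C) n : (forall k, 0 <= y k) ->
  \prod_(k < n) (1 + y k) * (1 - \sum_(k < n) y k) <= 1.
Proof.
move=> hy; elim: n => [|n IH]; first by rewrite !big_ord0 subr0 mulr1.
rewrite !big_ord_recr /=.
set S := \sum_(k < n) y k; set P := \prod_(k < n) (1 + y k).
have S0 : 0 <= S by apply: sumr_ge0 => k _.
have P0 : 0 <= P by apply: prodr_ge0 => k _; rewrite addr_ge0.
apply: le_trans IH.
rewrite -subr_ge0.
have -> : P * (1 - S) - P * (1 + y n) * (1 - (S + y n)) = P * (y n * S + y n ^+ 2) by ring.
by rewrite mulr_ge0 // addr_ge0 ?mulr_ge0 ?sqr_ge0.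
Qed.

Lemma sum_geo_le (c : C) n : 0 <= c -> 
  (\sum_(k < n) c * `|q| ^+ k) * (1 - `|q|) <= c.
Proof.
move=> c0; rewrite mulr_suml.
under eq_bigr do rewrite -mulrA.
rewrite -mulr_sumr geom_sum ler_piMr // lerBlDr lerDl exprn_ge0 //.
Qed.

Lemma qpoch_small (x : C) : `|x| <= (1 - `|q|) / 2 ->
  forall n, 1 / 2 <= `|qpoch x q n| /\ `|qpoch x q n| <= 2.
Proof.
move=> hx n.
have r1 : 0 < 1 - `|q| by rewrite subr_gt0.
set y := fun k => `|x| * `|q| ^+ k.
have hS : \sum_(k < n) y k <= 1 / 2.
  have := @sum_geo_le `|x| n (normr_ge0 x).
  rewrite -/y => h.
  rewrite -(ler_pM2r r1); apply: le_trans h _.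
  by rewrite mul1r mulrC.
have hy1 : forall k, y k <= 1 / 2.
  move=> k; apply: (@le_trans _ _ `|x|).
    by rewrite /y ler_piMr ?exprn_ge0 ?exprn_ile1 // ltW.
  apply: le_trans hx _.
  apply: ler_wpM2r; first by rewrite invr_ge0.
  by rewrite lerBlDr lerDl normr_ge0.
have hy0 : forall k, 0 <= y k by move=> k; rewrite mulr_ge0 ?exprn_ge0.
have h12 : 1 / 2 + 1 / 2 = 1 :> C by rewrite -splitr.
have hS' : 1 / 2 <= 1 - \sum_(k < n) y k.
  by rewrite lerBrDr; apply: le_trans (lerD (lexx (1 / 2)) hS) _; rewrite h12.
have hfac : forall k, `|1 - x * q ^+ k| = `|1 - (x * q ^+ k)| by [].
rewrite /qpoch normr_prod; split.
  apply: le_trans hS' _; apply: le_trans (@wlow y n _) _.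
    move=> k; rewrite hy0 /=; apply: le_trans (hy1 k) _.
    by rewrite -[X in _ <= X]h12 lerDr; apply: divr_ge0.
  apply: ler_prod => k _; apply/andP; split.
    rewrite subr_ge0; apply: le_trans (hy1 k) _.
    by rewrite -[X in _ <= X]h12 lerDr; apply: divr_ge0.
  by apply: le_trans (lerB_dist _ _); rewrite normr1 normrM normrX.
apply: (@le_trans _ _ (\prod_(k < n) (1 + y k))).
  apply: ler_prod => k _; rewrite normr_ge0 /=.
  by apply: le_trans (ler_normB _ _) _; rewrite normr1 normrM normrX.
have P0 : 0 <= \prod_(k < n) (1 + y k) by apply: prodr_ge0 => k _; rewrite addr_ge0.
have := @wup y n hy0 => h.
have h2 : 0 < 1 / 2 :> C by rewrite divr_gt0.
rewrite -(ler_pM2r h2).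
have -> : 2 * (1 / 2) = 1 :> C by rewrite mul1r divff // pnatr_eq0.
apply: le_trans h; exact: ler_wpM2l.
Qed.

Lemma exists_J (x : C) : exists J, `|x * q ^+ J| <= (1 - `|q|) / 2.
Proof.
have r1 : 0 < 1 - `|q| by rewrite subr_gt0.
have x1 : 0 < `|x| + 1 by rewrite ltr_wpDl.
have e0 : 0 < (1 - `|q|) / 2 / (`|x| + 1) by rewrite !divr_gt0.
have [N HN] := @geo_small R `|q| ((1 - `|q|) / 2 / (`|x| + 1)) (normr_ge0 q) hq1 e0.
exists N; rewrite normrM normrX; apply: ltW.
rewrite ltr_pdivlMr // in HN; apply: le_lt_trans HN.
by rewrite [X in _ <= X]mulrC ler_wpM2r ?exprn_ge0 // lerDl.
Qed.

Lemma sum_le_bound (w : nat -> C) {J n : nat} : (n <= J)%N ->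
  `|w n| <= \sum_(i < J.+1) `|w i|.
Proof.
move=> hn; have hn' : (n < J.+1)%N by [].
rewrite (bigD1 (Ordinal hn')) //= lerDl.
by apply: sumr_ge0 => i _.
Qed.

Lemma qpoch_bound (x : C) : exists U, 0 <= U /\ forall n, `|qpoch x q n| <= U.
Proof.
have [J hJ] := exists_J x.
set S := \sum_(i < J.+1) `|qpoch x q i|.
have S0 : 0 <= S by apply: sumr_ge0 => i _.
exists (2 * S); split; first by rewrite mulr_ge0.
have -> : 2 * S = S + S by rewrite mulr2n mulrDl mul1r.
move=> n; case: (leqP n J) => hn.
  by apply: le_trans (sum_le_bound (qpoch x q) hn) _; rewrite lerDl.
rewrite -(subnKC (ltnW hn)) qpochD normrM.
have [_ h2] := @qpoch_small (x * q ^+ J) hJ (n - J).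
apply: le_trans (_ : S * 2 <= _); last by rewrite mulrDr mulr1.
apply: ler_pM => //; exact: sum_le_bound.
Qed.

Lemma qpoch_inv_bound (x : C) : (forall k, x * q ^+ k != 1) ->
  exists V, 0 <= V /\ forall n, `|(qpoch x q n)^-1| <= V.
Proof.
move=> hx; have [J hJ] := exists_J x.
set S := \sum_(i < J.+1) `|(qpoch x q i)^-1|.
have S0 : 0 <= S by apply: sumr_ge0 => i _.
exists (2 * S); split; first by rewrite mulr_ge0.
have -> : 2 * S = S + S by rewrite mulr2n mulrDl mul1r.
move=> n; case: (leqP n J) => hn.
  apply: le_trans (sum_le_bound (fun i => (qpoch x q i)^-1) hn) _.
  by rewrite lerDl.
rewrite -(subnKC (ltnW hn)) qpochD invfM normrM.
have [h1 _] := @qpoch_small (x * q ^+ J) hJ (n - J).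
apply: le_trans (_ : S * 2 <= _); last by rewrite mulrDr mulr1.
apply: ler_pM => //.
  exact: (sum_le_bound (fun i => (qpoch x q i)^-1) (leqnn J)).
have hp : 0 < `|qpoch (x * q ^+ J) q (n - J)|.
  by apply: lt_le_trans h1; rewrite divr_gt0.
rewrite normfV -(ler_pM2r hp) mulVf ?gt_eqF //.
apply: le_trans (_ : 2 * (1 / 2) <= _); first by rewrite mul1r divff // pnatr_eq0.
by rewrite ler_pM2l.
Qed.

Lemma qpoch_cvg (x : C) : cvg (qpoch x q @ \oo).
Proof.
have [U [U0 hU]] := qpoch_bound x.
suff H : forall n, `|qpoch x q n.+1 - qpoch x q n| <= U * `|x| * `|q| ^+ n.
  have G := @geom_cvg R (qpoch x q) (U * `|x|) `|q|.
  have [G1 _] := G (mulr_ge0 U0 (normr_ge0 x)) (normr_ge0 q) hq1 H.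
  exact: G1.
move=> n; rewrite qpochS.
have -> : qpoch x q n * (1 - x * q ^+ n) - qpoch x q n = - (qpoch x q n * (x * q ^+ n)) by ring.
rewrite normrN !normrM normrX mulrA ler_wpM2r ?exprn_ge0 // ler_wpM2r //.
Qed.

Lemma qpoch_inf_S (x : C) : qpoch_inf x q = (1 - x) * qpoch_inf (x * q) q.
Proof.
rewrite /qpoch_inf; apply: cvg_lim => //.
rewrite -cvg_shiftS.
have -> : (fun n => qpoch x q n.+1) = (fun n => (1 - x) * qpoch (x * q) q n).
  by apply: funext => n; exact: qpochSl.
by apply: cvgMl_tmp; exact: qpoch_cvg.
Qed.

Lemma qpoch_inf_split (x : C) k : qpoch_inf x q = qpoch x q k * qpoch_inf (x * q ^+ k) q.
Proof.
elim: k => [|k IH]; first by rewrite qpoch0 expr0 mulr1 mul1r.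
by rewrite IH qpoch_inf_S qpochS exprSr mulrA mulrA.
Qed.
End Cq.

Section D.
Variable R : realType.
Local Notation C := (Cplx R).
Variables (q a : C).
Hypotheses (hq0 : q != 0) (ha : a != 0).

Definition Dl (u : nat -> C) : nat -> C := fun j => (u j - u j.+1) / (a * q ^+ j).
Definition Dln n u := iter n Dl u.

Lemma DlnS n u j : Dln n.+1 u j = (Dln n u j - Dln n u j.+1) / (a * q ^+ j).
Proof. by []. Qed.

Lemma Dqn_orbit (f : C -> C) n j :
  Dqn q n f (a * q ^+ j) = Dln n (fun i => f (a * q ^+ i)) j.
Proof.
elim: n j => [|n IH] j //=.
rewrite /Dq -/(Dqn q n f) -/(Dln n _) IH.
by rewrite -mulrA -exprSr IH.
Qed.

Lemma Dln_scale (c : C) (u : nat -> C) n j :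
  Dln n (fun i => c * u i) j = c * Dln n u j.
Proof.
elim: n j => [|n IH] j //.
by rewrite !DlnS !IH -mulrBr mulrA.
Qed.

Fixpoint qb (n k : nat) : C :=
  match n, k with
  | 0, 0 => 1
  | 0, _.+1 => 0
  | n'.+1, 0 => 1
  | n'.+1, k'.+1 => qb n' k' + q ^+ k'.+1 * qb n' k'.+1
  end.

Lemma qb_n0 n : qb n 0 = 1. Proof. by case: n. Qed.

Lemma qb_gt n k : (n < k)%N -> qb n k = 0.
Proof.
elim: n k => [|n IH] [|k] //= hk.
by rewrite !IH ?mulr0 ?addr0 // ltnW.
Qed.

Lemma alg_qb (A B X Y Qn e f : C) :
  A * (X * (Y * (1 - q * f))) = Qn -> B * (X * (1 - q * e) * Y) = Qn ->
  (A + q * e * B) * (X * (1 - q * e) * (Y * (1 - q * f))) = Qn * (1 - q * (q * e * f)).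
Proof.
move=> h1 h2.
transitivity ((1 - q * e) * Qn + q * e * (1 - q * f) * Qn); last by ring.
by rewrite -{1}h1 -h2; ring.
Qed.

Lemma qbE n k : (k <= n)%N -> qb n k * (qpoch q q k * qpoch q q (n - k)) = qpoch q q n.
Proof.
elim: n k => [|n IH] [|k] hk //.
- by rewrite /= !qpoch0 !mulr1.
- by rewrite qb_n0 qpoch0 subn0 !mul1r.
rewrite subSS /=.
case: (ltngtP k n) hk => [hkn _|hkn hk'|hkn _]; last first.
  rewrite hkn (@qb_gt n n.+1 (ltnSn n)) mulr0 addr0 subnn qpoch0 mulr1.
  have h := IH n (leqnn n); rewrite subnn qpoch0 mulr1 in h.
  by rewrite qpochS -[in RHS]h mulrA.
  by move: hk'; rewrite ltnS leqNgt hkn.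
  have h1 := IH k (ltnW hkn).
  have h2 := IH k.+1 hkn.
  move: h1 h2; rewrite -(subnSK hkn) !qpochS.
  set m := (n - k.+1)%N.
  have -> : n = (k.+1 + m)%N by rewrite /m subnKC.
  rewrite exprD exprS => h1 h2.
  by apply: alg_qb.
Qed.

Lemma leib_term (A B : nat -> C) j k :
  (A j * B (j + k)%N - A j.+1 * B (j.+1 + k)%N) / (a * q ^+ j)
  = Dl A j * B (j + k).+1 + q ^+ k * (A j * Dl B (j + k)%N).
Proof.
rewrite /Dl addSn exprD.
have hj : q ^+ j != 0 by rewrite expf_neq0.
have hk : q ^+ k != 0 by rewrite expf_neq0.
by field; rewrite hj hk ha.
Qed.

Lemma leibniz (s g : nat -> C) n j :
  Dln n (fun i => s i * g i) j =
  \sum_(k < n.+1) qb n k * (Dln k s j * Dln (n - k) g (j + k)%N).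
Proof.
elim: n j => [|n IH] j.
  by rewrite big_ord_recl big_ord0 /= addn0 mul1r addr0.
rewrite DlnS !IH -sumrB mulr_suml.
under eq_bigr do rewrite -mulrBr -mulrA leib_term.
under eq_bigr do rewrite mulrDr.
rewrite big_split /=.
rewrite [RHS]big_ord_recl /= addn0 mul1r.
under [X in _ = _ + X]eq_bigr do rewrite /bump /= !add0n subSS mulrDl.
rewrite big_split /= addrCA; congr (_ + _).
  by apply: eq_bigr => i _; rewrite addnS.
rewrite big_ord_recl /= subn0 addn0 expr0 mul1r qb_n0 mul1r; congr (_ + _).
rewrite [RHS]big_ord_recr /= (@qb_gt n n.+1 (ltnSn n)) mulr0 mul0r addr0.
apply: eq_bigr => i _.
have hi := ltn_ord i.
rewrite /bump /= !add0n !add1n -(subnSK hi) mulrA [q ^+ _ * _]mulrC.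
by [].
Qed.
End D.

Section E.
Variable R : realType.
Local Notation C := (Cplx R).
Variables (q a s t v : C).
Hypotheses (hq0 : q != 0) (ha : a != 0) (hv : v != 0).
Hypotheses (hav : forall k : nat, a * v * q ^+ k != 1)
  (has : forall k : nat, a * s * q ^+ k != 1)
  (hat : forall k : nat, a * t * q ^+ k != 1).

Local Notation Dl := (@Dl R q a).
Local Notation Dln := (@Dln R q a).

Definition sig (i : nat) : C := (qpoch (a * s) q i)^-1.

Lemma sig_step i : sig i - sig i.+1 = - s * (a * q ^+ i) * sig i.+1.
Proof.
rewrite /sig qpochS.
have h1 := @qpoch_neq0 R q (a * s) has i.
have h2 : 1 - a * s * q ^+ i != 0 by rewrite subr_eq0 eq_sym.
by field; rewrite h1 h2.
Qed.

Lemma Dln_sig k j : Dln k sig j = (- s) ^+ k * q ^+ 'C(k, 2) * sig (j + k)%N.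
Proof.
elim: k j => [|k IH] j; first by rewrite expr0 bin0n expr0 !mul1r addn0.
rewrite DlnS !IH addSn -mulrBr sig_step binS bin1 exprD addnS.
have hj : q ^+ j != 0 by rewrite expf_neq0.
have hk : q ^+ k != 0 by rewrite expf_neq0.
rewrite exprD.
set S := sig _; set Q := q ^+ 'C(k, 2); set J := q ^+ j; set K := q ^+ k.
rewrite exprS.
by field; rewrite hj ha.
Qed.

Definition gam (m i : nat) : C := qpoch (a * v) q i / qpoch (a * t) q (i + m).

Lemma gam_step m i : gam m i - gam m i.+1 = (a * q ^+ i) * (v - t * q ^+ m) * gam m.+1 i.
Proof.
rewrite /gam addSn addnS !qpochS.
have h1 := @qpoch_neq0 R q (a * t) hat (i + m).
have h2 : 1 - a * t * q ^+ (i + m) != 0 by rewrite subr_eq0 eq_sym.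
move: h2; rewrite exprD => h2.
set V := qpoch _ _ i; set T := qpoch _ _ (i + m).
set I := q ^+ i; set M := q ^+ m.
by field; rewrite h1 h2.
Qed.

Lemma Dln_gam m i : Dln m (gam 0) i = (\prod_(l < m) (v - t * q ^+ l)) * gam m i.
Proof.
elim: m i => [|m IH] i; first by rewrite big_ord0 mul1r.
rewrite DlnS !IH -mulrBr gam_step big_ord_recr /=.
have hi : q ^+ i != 0 by rewrite expf_neq0.
set P := \prod_(_ < m) _; set G := gam _ _; set I := q ^+ i; set M := q ^+ m.
by field; rewrite hi ha.
Qed.

Lemma prod_vt m : \prod_(l < m) (v - t * q ^+ l) = v ^+ m * qpoch (t / v) q m.
Proof.
elim: m => [|m IH]; first by rewrite big_ord0 qpoch0 expr0 mulr1.
rewrite big_ord_recr /= IH qpochS exprS.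
set M := q ^+ m; set P := qpoch _ _ _; set V := v ^+ m.
by field.
Qed.

Hypothesis hqq : forall k : nat, q * q ^+ k != 1.

Definition Ak (b : C) k : C := (-1) ^+ k * q ^+ 'C(k, 2) * qpoch (a * v) q k * (b * s) ^+ k
      / (qpoch q q k * (qpoch (a * s) q k * qpoch (a * t) q k)).
Definition phk (b : C) k m := phi21_term (t / v) 0 (a * t * q ^+ k) q (b * v) m.

Lemma hatk k : forall l, a * t * q ^+ k * q ^+ l != 1.
Proof. by move=> l; rewrite -mulrA -exprD hat. Qed.

Lemma term_id b k m :
  b ^+ (k + m) / qpoch q q (k + m) *
    (@qb R q (k + m) k * (Dln k sig 0 * Dln (k + m - k) (gam 0) (0 + k)))
  = Ak b k * phk b k m.
Proof.
rewrite addKn add0n Dln_sig Dln_gam prod_vt add0n.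
have hE := @qbE R q (k + m) k (leq_addr m k); rewrite addKn in hE.
have q1 := @qpoch_neq0 R q q hqq k.
have q2 := @qpoch_neq0 R q q hqq m.
have q3 := @qpoch_neq0 R q q hqq (k + m).
have s1 := @qpoch_neq0 R q (a * s) has k.
have t1 := @qpoch_neq0 R q (a * t) hat k.
have t2 := @qpoch_neq0 R q (a * t * q ^+ k) (hatk k) m.
have hqb : @qb R q (k + m) k = qpoch q q (k + m) / (qpoch q q k * qpoch q q m).
  by rewrite -hE; field; rewrite q1 q2.
rewrite hqb /gam /sig /Ak /phk /phi21_term qpoch_0x (@qpochD R q (a * t) k m).
rewrite exprD !exprMn (exprNn s k).
set Qk := qpoch q q k; set Qm := qpoch q q m; set Qkm := qpoch q q (k + m).
set Sk := qpoch (a * s) q k; set Tk := qpoch (a * t) q k.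
set Tkm := qpoch (a * t * q ^+ k) q m; set Vk := qpoch (a * v) q k.
set W := qpoch (t / v) q m; set B := q ^+ 'C(k, 2).
set bk := b ^+ k; set bm := b ^+ m; set sk := s ^+ k; set vm := v ^+ m; set ek := (-1) ^+ k.
have vm0 : vm != 0 by rewrite expf_neq0.
by field; rewrite q1 q2 q3 s1 t1 t2.
Qed.
End E.

Section F.
Variable R : realType.
Local Notation C := (Cplx R).

Lemma series_0 (u : nat -> C) : series u 0 = 0.
Proof. by rewrite /series /= big_geq. Qed.

Lemma series_tail (u : nat -> C) (K r : C) : 0 <= K -> 0 <= r -> r < 1 ->
  (forall n, `|u n| <= K * r ^+ n) ->
  cvg (series u @ \oo) /\ forall n, `|limn (series u) - series u n| <= K * r ^+ n / (1 - r).
Proof.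
move=> K0 r0 r1 H; apply: geom_cvg => // n.
by rewrite seriesSB.
Qed.

Lemma small_pow (r : C) : 0 <= r -> r < 1 -> exists sg : C, exists c : C,
  [/\ 0 <= sg, sg < 1, 0 <= c & forall N, r ^+ N <= sg ^+ N /\ N%:R * r ^+ N <= c * sg ^+ N].
Proof.
move=> r0 r1.
set sg := (1 + r) / 2.
have sg0 : 0 < sg by rewrite divr_gt0 // ltr_wpDr.
have rsg : r < sg.
  by rewrite /sg ltr_pdivlMr // mulrDr mulr1 ltrD2r.
have sg1 : sg < 1.
  by rewrite /sg ltr_pdivrMr // mul1r ltrD2l.
set th := r / sg.
have th0 : 0 <= th by rewrite divr_ge0 // ltW.
have th1 : th < 1 by rewrite /th ltr_pdivrMr // mul1r.
have th1' : 0 < 1 - th by rewrite subr_gt0.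
exists sg, (1 - th)^-1; split => //; first exact: ltW.
  by rewrite invr_ge0 ltW.
move=> N; split.
  by apply: lerXn2r => //; rewrite ?nnegrE ?ltW.
have -> : r = th * sg by rewrite /th divfK // gt_eqF.
rewrite exprMn mulrA ler_pM2r ?exprn_gt0 //.
rewrite -[(1 - th)^-1]mul1r ler_pdivlMr //.
rewrite mulr_natl -[in X in _ *+ X](card_ord N) -sumr_const mulr_suml.
apply: le_trans (_ : \sum_(k < N) th ^+ k * (1 - th) <= _).
  apply: ler_sum => k _; rewrite ler_pM2r //.
  by apply: ler_wiXn2l => //; [exact: ltW | exact: ltnW].
by rewrite geom_sum lerBlDr lerDl exprn_ge0.
Qed.

Lemma diag_series (al : nat -> C) (ph : nat -> nat -> C) N :
  series (fun n => \sum_(k < n.+1) al k * ph k (n - k)%N) N =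
  \sum_(k < N) al k * series (ph k) (N - k)%N.
Proof.
elim: N => [|N IH]; first by rewrite series_0 big_ord0.
rewrite seriesSr IH.
rewrite [in RHS]big_ord_recr /= subSnn.
under [in RHS]eq_bigr => k _ do rewrite (subSn (ltnW (ltn_ord k))) seriesSr mulrDr.
rewrite big_split /= -addrA; congr (_ + _).
rewrite big_ord_recr /= subnn; congr (_ + _).
by rewrite seriesSr series_0 add0r.
Qed.

Lemma series_ord (u : nat -> C) N : series u N = \sum_(k < N) u k.
Proof. by rewrite /series /= big_mkord. Qed.

Lemma dbl (al : nat -> C) (ph : nat -> nat -> C) (K1 K2 r : C) :
  0 <= K1 -> 0 <= K2 -> 0 <= r -> r < 1 ->
  (forall k, `|al k| <= K1 * r ^+ k) -> (forall k m, `|ph k m| <= K2 * r ^+ m) ->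
  [/\ forall k, cvg (series (ph k) @ \oo),
     cvg (series (fun k => al k * limn (series (ph k))) @ \oo),
     cvg (series (fun n => \sum_(k < n.+1) al k * ph k (n - k)%N) @ \oo) &
     limn (series (fun n => \sum_(k < n.+1) al k * ph k (n - k)%N)) =
       limn (series (fun k => al k * limn (series (ph k))))].
Proof.
move=> K10 K20 r0 r1 Hal Hph.
have r1' : 0 < 1 - r by rewrite subr_gt0.
have HP k := @series_tail (ph k) K2 r K20 r0 r1 (Hph k).
set Ph := fun k => limn (series (ph k)).
have hPh : forall k, `|Ph k| <= K2 / (1 - r).
  move=> k; have [_ h] := HP k; have := h 0%N.
  by rewrite series_0 subr0 expr0 mulr1.
set Y := fun k => al k * Ph k.
set KK := K1 * (K2 / (1 - r)).
have KK0 : 0 <= KK by rewrite mulr_ge0 // divr_ge0 // ltW.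
have hY : forall k, `|Y k| <= KK * r ^+ k.
  move=> k; rewrite /Y normrM /KK mulrAC.
  by apply: ler_pM; rewrite ?normr_ge0 ?Hal ?hPh.
have [cY tY] := @series_tail Y KK r KK0 r0 r1 hY.
set S := limn (series Y).
set D := series (fun n => \sum_(k < n.+1) al k * ph k (n - k)%N).
have hD : forall N, `|D N - series Y N| <= N%:R * (KK * r ^+ N).
  move=> N; rewrite /D diag_series series_ord -sumrB.
  apply: le_trans (ler_norm_sum _ _ _) _.
  rewrite mulr_natl -[in X in _ *+ X](card_ord N) -sumr_const.
  apply: ler_sum => k _.
  have hk : (k <= N)%N by apply: ltnW.
  rewrite /Y -mulrBr normrM.
  have [_ h] := HP k; have := h (N - k)%N; rewrite distrC => h'.
  apply: le_trans (ler_pM (normr_ge0 _) (normr_ge0 _) (Hal k) h') _.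
  have e : r ^+ N = r ^+ k * r ^+ (N - k) by rewrite -exprD subnKC.
  rewrite /KK e; set A := r ^+ k; set B := r ^+ (N - k).
  have -> : K1 * (K2 / (1 - r)) * (A * B) = K1 * A * (K2 * B / (1 - r)) by ring.
  exact: lexx.
have [sg [c [sg0 sg1 c0 Hsg]]] := @small_pow r r0 r1.
set CC := KK / (1 - r) + KK * c.
have CC0 : 0 <= CC by apply: addr_ge0; [apply: divr_ge0 => //; exact: ltW | exact: mulr_ge0].
have hb : forall N, `|S - D N| <= CC * sg ^+ N.
  move=> N.
  have -> : S - D N = (S - series Y N) + (series Y N - D N) by rewrite addrA subrK.
  apply: le_trans (ler_normD _ _) _.
  rewrite /CC mulrDl; apply: lerD.
    apply: le_trans (tY N) _.
    rewrite mulrAC; apply: ler_wpM2l; first by apply: divr_ge0 => //; exact: ltW.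
    by have [] := Hsg N.
  rewrite distrC; apply: le_trans (hD N) _.
  rewrite mulrCA -mulrA; apply: ler_wpM2l; first exact: KK0.
  by have [] := Hsg N.
have cD : D @ \oo --> S.
  apply/cvgrPdist_lt => e e0.
  have e1 : 0 < e / (CC + 1) by rewrite divr_gt0 // ltr_wpDl.
  have [N0 HN0] := @geo_small R sg _ sg0 sg1 e1.
  exists N0 => // N /= hN.
  apply: le_lt_trans (hb N) _.
  apply: (@le_lt_trans _ _ ((CC + 1) * sg ^+ N0)).
    apply: ler_pM; rewrite ?exprn_ge0 ?lerDl //.
    apply: ler_wiXn2l => //; exact: ltW.
  by rewrite mulrC -ltr_pdivlMr ?ltr_wpDl.
split.
- by move=> k; have [] := HP k.
- exact: cY.
- exact: cvgP cD.
- exact: cvg_lim cD.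
Qed.
End F.

Section G.
Variable R : realType.
Local Notation C := (Cplx R).

Lemma normM_le (x y X Y : C) : `|x| <= X -> `|y| <= Y -> `|x * y| <= X * Y.
Proof. by move=> hx hy; rewrite normrM; apply: ler_pM. Qed.

Lemma evbound (w : nat -> C) k0 : (forall k, 0 <= w k) ->
  (forall k, (k0 <= k)%N -> w k.+1 <= w k) ->
  forall k, w k <= \sum_(i < k0.+1) w i.
Proof.
move=> w0 hw.
have hs : forall n, (n <= k0)%N -> w n <= \sum_(i < k0.+1) w i.
  move=> n hn; have := @sum_le_bound R w k0 n hn.
  by rewrite ger0_norm //; under eq_bigr do rewrite ger0_norm //.
move=> k; case: (leqP k k0) => hk; first exact: hs.
apply: le_trans (hs k0 (leqnn k0)).
rewrite -(subnKC (ltnW hk)); elim: (k - k0)%N => [|n IH]; first by rewrite addn0.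
by apply: le_trans IH; rewrite addnS; apply: hw; rewrite leq_addr.
Qed.

Variable q : C.
Hypothesis hq1 : `|q| < 1.

Lemma super (c rho : C) : 0 <= c -> 0 < rho ->
  exists K, 0 <= K /\ forall k, `|q| ^+ 'C(k, 2) * c ^+ k <= K * rho ^+ k.
Proof.
move=> c0 rho0.
have e0 : 0 < rho / (c + 1) by rewrite divr_gt0 // ltr_wpDl.
have [k0 hk0] := @geo_small R `|q| _ (normr_ge0 q) hq1 e0.
set w := fun k => `|q| ^+ 'C(k, 2) * c ^+ k / rho ^+ k.
have w0 : forall k, 0 <= w k.
  by move=> k; rewrite /w divr_ge0 ?mulr_ge0 ?exprn_ge0 // ltW.
have hw : forall k, (k0 <= k)%N -> w k.+1 <= w k.
  move=> k hk.
  have -> : w k.+1 = w k * (`|q| ^+ k * c / rho).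
    rewrite /w binS bin1 !exprD !exprS.
    have hr : rho ^+ k != 0 by rewrite expf_neq0 // gt_eqF.
    set Q := `|q| ^+ 'C(k, 2); set Qk := `|q| ^+ k; set ck := c ^+ k; set rk := rho ^+ k.
    by field; rewrite hr gt_eqF.
  apply: ler_piMr => //.
  rewrite ler_pdivrMr // mul1r.
  have hq : `|q| ^+ k <= `|q| ^+ k0 by apply: ler_wiXn2l => //; exact: ltW.
  apply: le_trans (_ : `|q| ^+ k0 * (c + 1) <= _).
    by apply: ler_pM; rewrite ?exprn_ge0 ?lerDl.
  by rewrite -ler_pdivlMr ?ltr_wpDl // ltW.
exists (\sum_(i < k0.+1) w i); split; first by apply: sumr_ge0 => i _.
move=> k; have := @evbound w k0 w0 hw k.
rewrite /w ler_pdivrMr ?exprn_gt0 //.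
Qed.

Lemma hqq_of : forall k, q * q ^+ k != 1.
Proof.
move=> k; apply/eqP => h.
have := congr1 (fun z => `|z|) h; rewrite /= normr1 -exprS normrX => h'.
by have := @exprn_ilt1 _ k.+1 `|q| (normr_ge0 q) hq1; rewrite h' ltxx.
Qed.

Variables (a s t v b : C).
Hypotheses (hq0 : q != 0) (ha : a != 0) (hv : v != 0) (hbv : `|b * v| < 1).
Hypotheses (hav : forall k : nat, a * v * q ^+ k != 1)
  (has : forall k : nat, a * s * q ^+ k != 1)
  (hat : forall k : nat, a * t * q ^+ k != 1).

Definition rho := (1 + `|b * v|) / 2.

Lemma rho_props : [/\ 0 < rho, rho < 1 & `|b * v| <= rho].
Proof.
rewrite /rho; split.
- by rewrite divr_gt0 // ltr_wpDr.
- by rewrite ltr_pdivrMr // mul1r ltrD2l.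
- by rewrite ler_pdivlMr // mulrDr mulr1 lerD2r ltW.
Qed.

Lemma Ak_bound : exists K, 0 <= K /\ forall k, `|@Ak R q a s t v b k| <= K * rho ^+ k.
Proof.
have [rho0 _ _] := rho_props.
have [U [U0 hU]] := @qpoch_bound R q hq1 (a * v).
have [V1 [V10 hV1]] := @qpoch_inv_bound R q hq1 q hqq_of.
have [V2 [V20 hV2]] := @qpoch_inv_bound R q hq1 (a * s) has.
have [V3 [V30 hV3]] := @qpoch_inv_bound R q hq1 (a * t) hat.
have [K [K0 hK]] := @super `|b * s| rho (normr_ge0 _) rho0.
exists (1 * U * V1 * (V2 * V3) * K); split.
  by rewrite !mulr_ge0.
move=> k; rewrite -mulrA.
have -> : @Ak R q a s t v b k = ((-1) ^+ k * qpoch (a * v) q k * (qpoch q q k)^-1 *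
    ((qpoch (a * s) q k)^-1 * (qpoch (a * t) q k)^-1)) * (q ^+ 'C(k, 2) * (b * s) ^+ k).
  by rewrite /Ak !invfM; ring.
apply: normM_le.
  apply: normM_le => //; apply: normM_le => //; apply: normM_le => //.
  by rewrite normrX normrN normr1 expr1n.
by rewrite normrM !normrX.
Qed.

Lemma phk_bound : exists K, 0 <= K /\ forall k m, `|@phk R q a t v b k m| <= K * rho ^+ m.
Proof.
have [_ _ hr] := rho_props.
have [U1 [U10 hU1]] := @qpoch_bound R q hq1 (t / v).
have [U2 [U20 hU2]] := @qpoch_bound R q hq1 (a * t).
have [V1 [V10 hV1]] := @qpoch_inv_bound R q hq1 q hqq_of.
have [V3 [V30 hV3]] := @qpoch_inv_bound R q hq1 (a * t) hat.
exists (U1 * 1 * V1 * (U2 * V3)); split.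
  by rewrite !mulr_ge0.
move=> k m.
have t1 := @qpoch_neq0 R q (a * t) hat k.
have e : (qpoch (a * t * q ^+ k) q m)^-1 = qpoch (a * t) q k * (qpoch (a * t) q (k + m))^-1.
  by rewrite (@qpochD R q (a * t) k m) invfM mulrA divff // mul1r.
have -> : @phk R q a t v b k m = qpoch (t / v) q m * qpoch 0 q m * (qpoch q q m)^-1 *
    (qpoch (a * t) q k * (qpoch (a * t) q (k + m))^-1) * (b * v) ^+ m.
  by rewrite /phk /phi21_term -e invfM; ring.
apply: normM_le.
  apply: normM_le => //; apply: normM_le => //; apply: normM_le => //.
  by rewrite qpoch_0x normr1.
rewrite normrX; apply: lerXn2r => //; rewrite ?nnegrE //.
by apply: le_trans hr.
Qed.
End G.


Theorem mainTheorem1 (R : realType) (q b s t v a : Cplx R)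
  (hq0 : q != 0) (hq1 : `|q| < 1)
  (ha : a != 0) (hv : v != 0) (hbv : `|b * v| < 1)
  (hav : forall k : nat, a * v * q ^+ k != 1)
  (has : forall k : nat, a * s * q ^+ k != 1)
  (hat : forall k : nat, a * t * q ^+ k != 1) :
  let f : Cplx R -> Cplx R := fun x =>
    qpoch_inf (x * s) q * qpoch_inf (x * t) q / qpoch_inf (x * v) q in
  let c : nat -> Cplx R := fun k =>
    (-1) ^+ k * q ^+ 'C(k, 2) * qpoch (a * v) q k * (b * s) ^+ k
      / (qpoch q q k * (qpoch (a * s) q k * qpoch (a * t) q k))
      * phi21 (t / v) 0 (a * t * q ^+ k) q (b * v) in
  [/\ cvg (series (Tq_term q b f a) @ \oo),
      (forall k : nat, cvg (series (phi21_term (t / v) 0 (a * t * q ^+ k) q (b * v)) @ \oo)),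
      cvg (series c @ \oo) &
      Tq q b f a = f a * limn (series c)].
Proof.
move=> f c.
have hqq := @hqq_of R q hq1.
set F := f a.
have hf : forall i, f (a * q ^+ i) = F * (sig R q a s i * gam R q a t v 0 i).
  move=> i; rewrite /F /f /sig /gam addn0.
  have e1 := @qpoch_inf_split R q hq1 (a * s) i.
  have e2 := @qpoch_inf_split R q hq1 (a * t) i.
  have e3 := @qpoch_inf_split R q hq1 (a * v) i.
  rewrite !(mulrAC a (q ^+ i)) e1 e2 e3 invfM.
  have s1 := @qpoch_neq0 R q (a * s) has i.
  have t1 := @qpoch_neq0 R q (a * t) hat i.
  have v1 := @qpoch_neq0 R q (a * v) hav i.
  move: (qpoch_inf (a * v * q ^+ i) q)^-1 => Zi.
  set X := qpoch_inf _ _; set Y := qpoch_inf _ _.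
  by field; rewrite s1 t1 v1.
set Al := Ak R q a s t v b; set Ph := phk R q a t v b.
have hT : forall n, Tq_term q b f a n = F * \sum_(k < n.+1) Al k * Ph k (n - k)%N.
  move=> n; rewrite /Tq_term.
  have := @Dqn_orbit R q a f n 0; rewrite expr0 mulr1 => ->.
  have -> : (fun i => f (a * q ^+ i)) = (fun i => F * (sig R q a s i * gam R q a t v 0 i)).
    by apply: funext => i; exact: hf i.
  rewrite Dln_scale (@leibniz R q a hq0 ha) mulrCA mulr_sumr; congr (_ * _).
  apply: eq_bigr => k _.
  have hk : (k <= n)%N by rewrite -ltnS.
  have := @term_id R q a s t v hq0 ha hv has hat hqq b k (n - k)%N.
  by rewrite subnKC.
have [K1 [K10 hK1]] := @Ak_bound R q hq1 a s t v b hbv has hat.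
have [K2 [K20 hK2]] := @phk_bound R q hq1 a t v b hbv hat.
have [rho0 rho1 _] := @rho_props R v b hbv.
have [h1 h2 h3 h4] := @dbl R Al Ph K1 K2 (rho R v b) K10 K20 (ltW rho0) rho1 hK1 hK2.
set D := series (fun n => \sum_(k < n.+1) Al k * Ph k (n - k)%N) in h3 h4.
have eqT : series (Tq_term q b f a) = (fun N => F * D N).
  apply: funext => N; rewrite /D !series_ord mulr_sumr.
  by apply: eq_bigr => n _; rewrite hT.
have cT : series (Tq_term q b f a) @ \oo --> F * limn (series c).
  rewrite eqT; apply: cvgMl_tmp.
  have -> : limn (series c) = limn D by rewrite h4.
  exact: h3.
split.
- exact: cvgP cT.
- exact: h1.
- exact: h2.
- by rewrite /Tq; apply: cvg_lim.
Qed.
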